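(* Let $n\ge1$ and $\gamma\in PSL(n+1,\mathbb{C})$. Then there exists $h\in PSL(n+1,\mathbb{C})$ with $h^{-1}\gamma h(T(r))=T(r)$ for all $r>0$, where $T(r)=\{[z_1:\dots:z_{n+1}]:\sum_{j=1}^n|z_j|^2=r|z_{n+1}|^2\}$, if and only if $\gamma$ is conjugate in $PSL(n+1,\mathbb{C})$ to an elliptic element of $PU(n,1)$.
   Context: $PU(n,1)$ is the image in $PSL(n+1,\mathbb{C})$ of the group of matrices preserving the Hermitian form $\sum_{j=1}^n z_j\bar w_j-z_{n+1}\bar w_{n+1}$; it preserves the complex hyperbolic ball $B=\{[z]\in\mathbb{P}^n_{\mathbb{C}}:\sum_{j=1}^n|z_j|^2<|z_{n+1}|^2\}$, and an element of $PU(n,1)$ is elliptic if it has a fixed point in $B$. *)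

(* Defs.v *)
From HB Require Import structures.
From mathcomp Require Import all_boot all_order all_algebra.
From mathcomp Require Import complex.
From mathcomp Require Import reals.
Set Implicit Arguments. Unset Strict Implicit. Unset Printing Implicit Defensive.
Import Order.TTheory GRing.Theory Num.Theory.
Local Open Scope ring_scope.
Local Open Scope complex_scope.

Section Defs.
Variables (R : realType) (n : nat).
Local Notation C := (R[i]).

(* Points of P^n_C are represented by nonzero column vectors z in C^{n+1};
   the last coordinate (index ord_max) is z_{n+1}. *)

Definition head_sq (z : 'cV[C]_(n.+1)) : C :=
  \sum_(j < n.+1 | (j < n)%N) `|z j 0| ^+ 2.

Definition last_sq (z : 'cV[C]_(n.+1)) : C := `|z ord_max 0| ^+ 2.

Definition inT (r : C) (z : 'cV[C]_(n.+1)) : Prop := head_sq z = r * last_sq z.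

Definition inB (z : 'cV[C]_(n.+1)) : Prop := head_sq z < last_sq z.

Definition maps_T_onto (g : 'M[C]_(n.+1)) (r : C) : Prop :=
  (forall z : 'cV[C]_(n.+1), z != 0 -> inT r z -> inT r (g *m z)) /\
  (forall w : 'cV[C]_(n.+1), w != 0 -> inT r w ->
     exists2 z : 'cV[C]_(n.+1), z != 0 & inT r z /\ exists2 c : C, c != 0 & g *m z = c *: w).

Definition Jform : 'M[C]_(n.+1) :=
  \matrix_(i, j) (if i == j then (if (i < n)%N then 1 else -1) else 0).

Definition preserves_form (A : 'M[C]_(n.+1)) : Prop :=
  (map_mx Num.conj A)^T *m Jform *m A = Jform.

(* An element of PSL(n+1,C) lies in PU(n,1) and is elliptic: the class of g
   in PSL = PGL equals the class of some A preserving the form, and A has a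
   fixed point in B. *)
Definition elliptic_PU (g : 'M[C]_(n.+1)) : Prop :=
  exists A : 'M[C]_(n.+1), preserves_form A /\
    (exists2 c : C, c != 0 & g = c *: A) /\
    (exists z : 'cV[C]_(n.+1), z != 0 /\ inB z /\ exists lam : C, A *m z = lam *: z).

End Defs.

(* Main.v *)
Require Import Defs.
From HB Require Import structures.
From mathcomp Require Import all_boot all_order all_algebra.
From mathcomp Require Import complex.
From mathcomp Require Import reals.
From mathcomp Require Import ring.
Import Order.TTheory GRing.Theory Num.Theory.
Local Open Scope ring_scope.
Local Open Scope complex_scope.
Set Implicit Arguments. Unset Strict Implicit. Unset Printing Implicit Defensive.

Section S.
Variables (R : realType) (n : nat).
Local Open Scope ring_scope.
Local Notation C := (R[i]).
Local Notation cv := 'cV[C]_(n.+1).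

Definition hc p q (M : 'M[C]_(p,q)) : 'M[C]_(q,p) := (map_mx Num.conj M)^T.

Lemma hcM p q r (A : 'M[C]_(p,q)) (B : 'M[C]_(q,r)) : hc (A *m B) = hc B *m hc A.
Proof. by rewrite /hc map_mxM trmx_mul. Qed.

Lemma hcD p q (A B : 'M[C]_(p,q)) : hc (A + B) = hc A + hc B.
Proof. by apply/matrixP=> i j; rewrite !mxE rmorphD. Qed.

Lemma hcZ p q a (A : 'M[C]_(p,q)) : hc (a *: A) = a^* *: hc A.
Proof. by apply/matrixP=> i j; rewrite !mxE rmorphM. Qed.

Lemma hcK p q (A : 'M[C]_(p,q)) : hc (hc A) = A.
Proof. by apply/matrixP=> i j; rewrite !mxE conjCK. Qed.

Lemma hc_scalar p a : hc (a%:M : 'M[C]_p) = a^*%:M.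
Proof. by apply/matrixP=> i j; rewrite !mxE eq_sym; case: eqP => _; rewrite ?mulr1n ?mulr0n ?rmorph0. Qed.

Lemma hc_delta p q (i : 'I_p) (j : 'I_q) : hc (delta_mx i j : 'M[C]_(p,q)) = delta_mx j i.
Proof. by apply/matrixP=> a b; rewrite !mxE conjC_nat andbC. Qed.

Lemma hc_entry p q (M : 'M[C]_(p,q)) i j : hc M i j = (M j i)^*.
Proof. by rewrite !mxE. Qed.

Definition F (M : 'M[C]_(n.+1)) (u v : cv) : C := (hc v *m M *m u) 0 0.

Lemma F_delta M i j : F M (delta_mx j 0) (delta_mx i 0) = M i j.
Proof. by rewrite /F hc_delta -rowE -colE !mxE. Qed.

Lemma F_ext M N : (forall u v, F M u v = F N u v) -> M = N.
Proof. by move=> H; apply/matrixP=> i j; rewrite -!F_delta H. Qed.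

Lemma FDl M u1 u2 v : F M (u1 + u2) v = F M u1 v + F M u2 v.
Proof. by rewrite /F mulmxDr mxE. Qed.
Lemma FZl M a u v : F M (a *: u) v = a * F M u v.
Proof. by rewrite /F -scalemxAr mxE. Qed.
Lemma FDr M u v1 v2 : F M u (v1 + v2) = F M u v1 + F M u v2.
Proof. by rewrite /F hcD !mulmxDl mxE. Qed.
Lemma FZr M a u v : F M u (a *: v) = a^* * F M u v.
Proof. by rewrite /F hcZ -!scalemxAl mxE. Qed.

Lemma polar M (I : C) (hIc : I^* = -I) (hI : I ^+ 2 = -1) u v : 2 * F M u v =
  (F M (u + v) (u + v) - F M u u - F M v v)
  + I * (F M (u + I *: v) (u + I *: v) - F M u u - F M v v).
Proof.
rewrite !(FDl, FDr, FZl, FZr) hIc.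
set a := F M u v; set b := F M v u; set c := F M u u; set d := F M v v.
transitivity (2 * a + (I ^+ 2 + 1) * (b - a - I * d)); last by ring.
by rewrite hI addNr mul0r addr0.
Qed.


Lemma polar_scale M g c :
  (forall w, F M (g *m w) (g *m w) = c * F M w w) ->
  forall u v, F M (g *m u) (g *m v) = c * F M u v.
Proof.
move=> H u v; apply: (@mulfI _ 2); first by rewrite pnatr_eq0.
rewrite (polar _ (conjCi _) (sqrCi _)) !scalemxAr -!mulmxDr !H [in RHS]mulrCA [in RHS](polar _ (conjCi _) (sqrCi _)); ring.
Qed.

Lemma F_conj M g u v : F (hc g *m M *m g) u v = F M (g *m u) (g *m v).
Proof. by rewrite /F hcM !mulmxA. Qed.

Lemma FZM M a u v : F (a *: M) u v = a * F M u v.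
Proof. by rewrite /F -scalemxAr -scalemxAl mxE. Qed.

Lemma mxDE (u v : cv) i : (u + v) i 0 = u i 0 + v i 0. Proof. by rewrite mxE. Qed.
Lemma mxZE a (u : cv) i : (a *: u) i 0 = a * u i 0. Proof. by rewrite mxE. Qed.

Definition e : cv := delta_mx ord_max 0.

Definition Hs (u v : cv) : C := \sum_(j < n.+1 | (j < n)%N) u j 0 * (v j 0)^*.

Lemma head_Hs u : head_sq u = Hs u u.
Proof. by apply: eq_bigr => j _; rewrite normCK. Qed.

Lemma last_eq (u : cv) : last_sq u = u ord_max 0 * (u ord_max 0)^*.
Proof. by rewrite /last_sq normCK. Qed.

Lemma ltn_max (j : 'I_n.+1) : (j < n)%N = (j != ord_max).
Proof. by rewrite -(inj_eq val_inj) /= ltn_neqAle -ltnS ltn_ord andbT. Qed.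

Lemma sum_split (G : 'I_n.+1 -> C) : \sum_j G j = \sum_(j < n.+1 | (j < n)%N) G j + G ord_max.
Proof.
rewrite (bigD1 ord_max) //= addrC; congr (_ + _).
by apply: eq_bigl => j /=; rewrite ltn_max.
Qed.

Lemma HsDl u1 u2 v : Hs (u1 + u2) v = Hs u1 v + Hs u2 v.
Proof. by rewrite /Hs -big_split; apply: eq_bigr => j _; rewrite !mxE mulrDl. Qed.
Lemma HsDr u v1 v2 : Hs u (v1 + v2) = Hs u v1 + Hs u v2.
Proof. by rewrite /Hs -big_split; apply: eq_bigr => j _; rewrite !mxE rmorphD mulrDr. Qed.
Lemma HsZl a u v : Hs (a *: u) v = a * Hs u v.
Proof. by rewrite /Hs mulr_sumr; apply: eq_bigr => j _; rewrite !mxE mulrA. Qed.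
Lemma HsZr a u v : Hs u (a *: v) = a^* * Hs u v.
Proof. by rewrite /Hs mulr_sumr; apply: eq_bigr => j _; rewrite !mxE rmorphM mulrCA. Qed.

Lemma Hs0l (u v : cv) : (forall j : 'I_n.+1, (j < n)%N -> u j 0 = 0) -> Hs u v = 0.
Proof. by move=> H; rewrite /Hs big1 // => j /H ->; rewrite mul0r. Qed.
Lemma Hs0r (u v : cv) : (forall j : 'I_n.+1, (j < n)%N -> v j 0 = 0) -> Hs u v = 0.
Proof. by move=> H; rewrite /Hs big1 // => j /H ->; rewrite rmorph0 mulr0. Qed.

Lemma e_head (j : 'I_n.+1) : (j < n)%N -> e j 0 = 0.
Proof. by rewrite ltn_max /e mxE => /negbTE ->. Qed.
Lemma e_last : e ord_max 0 = 1.
Proof. by rewrite /e mxE !eqxx. Qed.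

Lemma HseL (v : cv) : Hs e v = 0. Proof. exact: Hs0l e_head. Qed.
Lemma HseR (v : cv) : Hs v e = 0. Proof. exact: Hs0r e_head. Qed.

Definition dJ : 'rV[C]_(n.+1) := \row_i (if (i < n)%N then 1 else -1).

Lemma Jdiag : Jform R n = diag_mx dJ.
Proof.
apply/matrixP => i j; rewrite !mxE; case: (i =P j) => [->|/eqP/negbTE hij].
  by rewrite mulr1n.
by rewrite mulr0n.
Qed.

Lemma FJ (u v : cv) : F (Jform R n) u v = Hs u v - u ord_max 0 * (v ord_max 0)^*.
Proof.
rewrite /F Jdiag mul_mx_diag !mxE sum_split !mxE ltnn.
rewrite /Hs mulrN1 mulNr mulrC; congr (_ - _).
by apply: eq_bigr => j hj; rewrite !mxE hj mulr1 mulrC.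
Qed.

Lemma FJ_head (u : cv) : F (Jform R n) u u = head_sq u - last_sq u.
Proof. by rewrite FJ head_Hs last_eq. Qed.

Lemma JJ : Jform R n *m Jform R n = 1%:M.
Proof.
apply/matrixP => i j; rewrite Jdiag mul_mx_diag !mxE eq_sym.
by case: eqP => [->|]; rewrite ?mulr1n ?mulr0n ?mul0r //; case: ifP; rewrite ?mulr1 ?mulrNN ?mulr1.
Qed.

Lemma detJ_neq0 : \det (Jform R n) != 0.
Proof.
apply/eqP => H; have := congr1 determinant JJ.
by rewrite det_mulmx H mul0r det1 => /eqP; rewrite eq_sym oner_eq0.
Qed.

Lemma form_unit P : hc P *m Jform R n *m P = Jform R n -> P \in unitmx.
Proof.
move=> H; rewrite unitmxE unitfE; apply/eqP => H0.
have := congr1 determinant H; rewrite det_mulmx H0 mulr0 => /eqP.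
by rewrite eq_sym (negbTE detJ_neq0).
Qed.

Lemma hc1 : hc (1%:M : 'M[C]_(n.+1)) = 1%:M.
Proof. by rewrite hc_scalar rmorph1. Qed.

Lemma invmxM' (A B : 'M[C]_(n.+1)) : A \in unitmx -> B \in unitmx ->
  invmx (A *m B) = invmx B *m invmx A.
Proof.
move=> uA uB; have uAB : A *m B \in unitmx by rewrite unitmx_mul uA.
have H1 : (A *m B) *m (invmx B *m invmx A) = 1%:M.
  by rewrite -mulmxA (mulmxA B) mulmxV // mul1mx mulmxV.
transitivity (invmx (A *m B) *m ((A *m B) *m (invmx B *m invmx A))).
  by rewrite H1 mulmx1.
by rewrite mulmxA mulVmx // mul1mx.
Qed.

Local Notation J := (Jform R n).

Lemma Bpres B lam : hc B *m J *m B = J -> B *m e = lam *: e ->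
  forall w : cv, head_sq (B *m w) = head_sq w /\ last_sq (B *m w) = last_sq w.
Proof.
move=> HB He.
have FB (u v : cv) : F J (B *m u) (B *m v) = F J u v by rewrite -F_conj HB.
have Fee : F J e e = -1 by rewrite FJ HseL e_last rmorph1 mulr1 sub0r.
have Fue (u : cv) : F J u e = - u ord_max 0 by rewrite FJ HseR e_last rmorph1 mulr1 sub0r.
have hl : lam * lam^* = 1.
  have := FB e e; rewrite He FZl FZr Fee mulrN1 mulrN => /eqP.
  by rewrite eqr_opp => /eqP.
have hn (w : cv) : (B *m w) ord_max 0 = lam * w ord_max 0.
  have := FB w e; rewrite He FZr !Fue => h.
  transitivity (lam * lam^* * (B *m w) ord_max 0); first by rewrite hl mul1r.
  by rewrite -mulrA -[lam^* * _]opprK -mulrN h opprK.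
move=> w; split.
  have := FB w w; rewrite !FJ_head !last_eq hn rmorphM mulrACA hl mul1r.
  exact: addIr.
by rewrite !last_eq hn rmorphM mulrACA hl mul1r.
Qed.

Lemma head_scale c (u : cv) : head_sq (c *: u) = c * c^* * head_sq u.
Proof. by rewrite !head_Hs HsZl HsZr mulrA. Qed.
Lemma last_scale c (u : cv) : last_sq (c *: u) = c * c^* * last_sq u.
Proof. by rewrite !last_eq !mxE rmorphM mulrACA. Qed.

Lemma T_of_B B c lam : hc B *m J *m B = J -> B *m e = lam *: e -> c != 0 ->
  forall r, maps_T_onto (c *: B) r.
Proof.
move=> HB He c0 r; have uB := form_unit HB; split.
  move=> z _; rewrite /inT => hz.
  rewrite -scalemxAl head_scale last_scale; have [h1 h2] := Bpres HB He z.
  by rewrite h1 h2 hz mulrCA.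
move=> w w0 hw; exists (invmx B *m w).
  by apply: contra w0 => /eqP h0; rewrite -(mulKVmx uB w) h0 mulmx0.
split.
  rewrite /inT; have [h1 h2] := Bpres HB He (invmx B *m w).
  by rewrite mulKVmx // in h1 h2; rewrite -h1 -h2.
by exists c => //; rewrite -scalemxAl mulKVmx.
Qed.

Lemma head_ge0 (z : cv) : 0 <= head_sq z.
Proof. by apply: sumr_ge0 => j _; rewrite exprn_ge0. Qed.

Lemma Hs_conj (u v : cv) : Hs v u = (Hs u v)^*.
Proof. by rewrite /Hs rmorph_sum; apply: eq_bigr => j _; rewrite rmorphM /= conjCK mulrC. Qed.

Lemma conj_construct A (z : cv) lam :
  hc A *m J *m A = J -> z != 0 -> inB z -> A *m z = lam *: z ->
  exists k : 'M[C]_(n.+1), k \in unitmx /\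
    hc (invmx k *m A *m k) *m J *m (invmx k *m A *m k) = J /\
    (invmx k *m A *m k) *m e = lam *: e.
Proof.
move=> hA z0 hz hAz.
set zn := z ord_max 0.
have hzn : zn != 0.
  apply/eqP => h0; move: hz; rewrite /inB /last_sq -/zn h0 normr0 expr0n /=.
  by move=> h; have := le_lt_trans (head_ge0 z) h; rewrite ltxx.
set x := zn^-1 *: z + (-1) *: e.
have hxn : x ord_max 0 = 0 by rewrite !mxE !eqxx /= -/zn mulVf // mulr1 subrr.
set q := Hs x x.
have hq : q = zn^-1 * zn^-1^* * head_sq z.
  by rewrite /q HsDl !HsDr !HsZl !HsZr !HseL !HseR !mulr0 !addr0 head_Hs mulrA.
have hq1 : q < 1.
  have hp : 0 < zn^-1 * zn^-1^* by rewrite mul_conjC_gt0 invr_eq0.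
  have : head_sq z * (zn^-1 * zn^-1^*) < last_sq z * (zn^-1 * zn^-1^*) by rewrite ltr_pM2r.
  have -> : last_sq z * (zn^-1 * zn^-1^*) = 1.
    by rewrite last_eq -/zn mulrACA divff // fmorphV divff ?mul1r ?conjC_eq0.
  by rewrite hq mulrC.
have q1 : 0 < 1 - q by rewrite subr_gt0.
have xdef : x = zn^-1 *: z + (-1) *: e by [].
clearbody x.
set s := (sqrtC (1 - q))^-1.
have s0 : 0 < s by rewrite invr_gt0 sqrtC_gt0.
have sc : s^* = s by rewrite conj_Creal // gtr0_real.
have sn0 : s != 0 by rewrite gt_eqF.
have s1 : 1 + s != 0 by rewrite gt_eqF // addr_gt0 // ltr01.
have hs2 : q = 1 - (s ^+ 2)^-1.
  by rewrite /s exprVn invrK sqrtCK opprB addrC subrK.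
set be := s ^+ 2 / (1 + s).
have bc : be^* = be by rewrite conj_Creal // gtr0_real // divr_gt0 ?exprn_gt0 // addr_gt0 // ltr01.
have bdef : be = s ^+ 2 / (1 + s) by [].
clearbody be.
set k := 1%:M + be *: (x *m hc x) + s *: (x *m hc e) + s *: (e *m hc x) + (s - 1) *: (e *m hc e).
have ha (w : cv) : (hc x *m w) 0 0 = Hs w x.
  rewrite mxE sum_split !hc_entry hxn rmorph0 mul0r addr0 /Hs.
  by apply: eq_bigr => j _; rewrite hc_entry mulrC.
have kw (w : cv) : k *m w = w + (be * Hs w x + s * w ord_max 0) *: x
     + (s * Hs w x + (s - 1) * w ord_max 0) *: e.
  have h1 : hc x *m w = (Hs w x)%:M by rewrite [LHS]mx11_scalar ha.
  have h2 : hc e *m w = (w ord_max 0)%:M.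
    by rewrite [LHS]mx11_scalar /e hc_delta -rowE mxE.
  rewrite /k !mulmxDl mul1mx -!scalemxAl -!mulmxA h1 h2 !mul_mx_scalar.
  apply/matrixP => i j; rewrite !mxE; set d := (_ && _)%:R; ring.
clearbody k.
have kQ (w : cv) : F J (k *m w) (k *m w) = 1 * F J w w.
  rewrite kw !FJ !mxDE !mxZE hxn e_last mul1r.
  rewrite !HsDl !HsDr !HsZl !HsZr !HseL !HseR (Hs_conj w x) -/q.
  rewrite !rmorphD !rmorphM /= !rmorphB /= !rmorph1 sc bc hs2 bdef.
  set a := Hs w x; set b := w ord_max 0.
  rewrite !rmorphD !rmorphM /= !rmorphB /= !rmorph1 !rmorph0 sc. field. by rewrite /= ?sc ?s1 ?sn0.
have hk : hc k *m J *m k = J.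
  apply: F_ext => u v; rewrite F_conj (polar_scale kQ) mul1r //.
have uk := form_unit hk.
have ke : k *m e = (s * zn^-1) *: z.
  rewrite kw HseL e_last xdef.
  apply/matrixP => i j; rewrite !mxE; set d := (_ && _)%:R; ring.
have uA := form_unit hA.
have hki : hc (invmx k) *m J *m invmx k = J.
  by rewrite -{1}hk !mulmxA -hcM mulmxV // hc1 mul1mx -mulmxA mulmxV // mulmx1.
exists k; split => //; split.
  rewrite !hcM.
  transitivity (hc k *m (hc A *m (hc (invmx k) *m J *m invmx k) *m A) *m k).
    by rewrite !mulmxA.
  by rewrite hki hA hk.
have sz0 : s * zn^-1 != 0 by rewrite mulf_neq0 // invr_eq0.
rewrite -!mulmxA ke -scalemxAr hAz scalerA mulrC -scalerA -ke -scalemxAr.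
by rewrite mulKmx.
Qed.

Lemma poly5 (p0 p1 p2 p3 p4 : C) :
  (forall t : nat, (0 < t)%N -> (t <= 5)%N ->
     p0 + p1 * t%:R + p2 * t%:R ^+ 2 + p3 * t%:R ^+ 3 + p4 * t%:R ^+ 4 = 0) ->
  [/\ p0 = 0, p2 = 0 & p4 = 0].
Proof.
move=> H.
pose f (t : nat) := p0 + p1 * t%:R + p2 * t%:R ^+ 2 + p3 * t%:R ^+ 3 + p4 * t%:R ^+ 4.
have Hf t : (0 < t)%N -> (t <= 5)%N -> f t = 0 by exact: H.
have k0 : p0 = 5%:R * f 1%N - 10%:R * f 2%N + 10%:R * f 3%N - 5%:R * f 4%N + f 5%N.
  by rewrite /f; ring.
have k2 : 24%:R * p2 = 71%:R * f 1%N - 236%:R * f 2%N + 294%:R * f 3%N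
     - 164%:R * f 4%N + 35%:R * f 5%N.
  by rewrite /f; ring.
have k4 : 24%:R * p4 = f 1%N - 4%:R * f 2%N + 6%:R * f 3%N - 4%:R * f 4%N + f 5%N.
  by rewrite /f; ring.
rewrite !Hf // !mulr0 !subr0 !addr0 in k0 k2 k4.
have n24 : (24%:R : C) != 0 by rewrite pnatr_eq0.
split => //.
  by apply/eqP; move/eqP: k2; rewrite mulf_eq0 (negbTE n24).
by apply/eqP; move/eqP: k4; rewrite mulf_eq0 (negbTE n24).
Qed.

Lemma headD (u v : cv) t : head_sq (u + t *: v) =
  head_sq u + t^* * Hs u v + t * Hs v u + t * t^* * head_sq v.
Proof. by rewrite !head_Hs !HsDl !HsDr !HsZl !HsZr; ring. Qed.

Lemma head0 : head_sq (0 : cv) = 0.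
Proof. by rewrite head_Hs /Hs big1 // => j _; rewrite mxE mul0r. Qed.

Lemma head_delta (j : 'I_n.+1) : (j < n)%N -> head_sq (delta_mx j 0 : cv) = 1.
Proof.
move=> hj; rewrite /head_sq (bigD1 j) //= big1 => [|l /andP [_ hl]].
  by rewrite mxE !eqxx /= normr1 expr1n addr0.
by rewrite mxE (negbTE hl) /= normr0 expr0n.
Qed.

Lemma head_eq0 (w : cv) : head_sq w = 0 -> forall j : 'I_n.+1, (j < n)%N -> w j 0 = 0.
Proof.
move=> h j hj; have := psumr_eq0P (fun i _ => exprn_ge0 2 (normr_ge0 (w i 0))) h hj.
by move/eqP; rewrite sqrf_eq0 normr_eq0 => /eqP.
Qed.


Lemma key_poly (g : 'M[C]_(n.+1)) (w : cv) :
  (forall r : C, 0 < r -> forall z : cv, z != 0 -> inT r z -> inT r (g *m z)) ->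
  w ord_max 0 = 0 -> 0 < head_sq w ->
  [/\ head_sq w * last_sq (g *m w) = 0,
      head_sq (g *m w) - head_sq w * last_sq (g *m e) = 0 &
      head_sq (g *m e) = 0].
Proof.
move=> H wn hw.
set c := g *m e; set Hw := head_sq w.
set a := (g *m w) ord_max 0; set b := c ord_max 0.
pose X := Hs (g *m w) c + Hs c (g *m w).
pose Y := a * b^* + b * a^*.
have [h0 h2 h4] : [/\ - (Hw * last_sq (g *m w)) = 0,
    head_sq (g *m w) - Hw * last_sq c = 0 & head_sq c = 0].
  apply: (@poly5 _ (- (Hw * Y)) _ X) => t t0 t5.
  have tc : (t%:R : C)^* = t%:R by rewrite conjC_nat.
  have tn0 : (t%:R : C) != 0 by rewrite pnatr_eq0 -lt0n.
  set z := w + t%:R *: e.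
  have z0 : z != 0.
    apply/eqP => /matrixP /(_ ord_max 0); rewrite mxDE mxZE wn e_last mxE.
    by rewrite add0r mulr1 => /eqP; rewrite (negbTE tn0).
  have hzh : head_sq z = Hw by rewrite headD HseR (HseL w) [head_sq e]head_Hs (HseL e) !mulr0 !addr0.
  have hzl : last_sq z = t%:R ^+ 2 by rewrite (last_eq z) mxDE mxZE wn e_last add0r mulr1 tc.
  have r0 : 0 < Hw / t%:R ^+ 2 by rewrite divr_gt0 // exprn_gt0 // ltr0n.
  have := H _ r0 z z0; rewrite /inT hzh hzl divfK ?expf_neq0 // => /(_ erefl).
  rewrite /z mulmxDr -scalemxAr -/c headD !last_eq !mxDE !mxZE -/a -/b tc => E.
  transitivity (t%:R ^+ 2 * (head_sq (g *m w) + t%:R * Hs (g *m w) c +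
    t%:R * Hs c (g *m w) + t%:R * t%:R * head_sq c) -
    Hw * ((a + t%:R * b) * (a + t%:R * b)^*)).
    by rewrite /X /Y rmorphD rmorphM /= tc; ring.
  by rewrite E; field; rewrite ?tn0.
by split => //; move/eqP: h0; rewrite oppr_eq0 => /eqP.
Qed.

Lemma forward_elliptic (g : 'M[C]_(n.+1)) : (0 < n)%N -> g \in unitmx ->
  (forall r : C, 0 < r -> forall z : cv, z != 0 -> inT r z -> inT r (g *m z)) ->
  elliptic_PU g.
Proof.
move=> hn ug H.
have cE (i : 'I_n.+1) : (g *m e) i 0 = g i ord_max by rewrite /e -colE mxE.
pose mu := g ord_max ord_max.
have hdn (j : 'I_n.+1) : (j < n)%N -> (delta_mx j 0 : cv) ord_max 0 = 0.
  by rewrite mxE ltn_max eq_sym => /negbTE ->.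
have hd0 (j : 'I_n.+1) : (j < n)%N -> 0 < head_sq (delta_mx j 0 : cv).
  by move=> hj; rewrite head_delta // ltr01.
have o0 : ((ord0 : 'I_n.+1) < n)%N by [].
have hc0 : forall l : 'I_n.+1, (l < n)%N -> (g *m e) l 0 = 0.
  apply: head_eq0.
  by have [] := key_poly H (hdn _ o0) (hd0 _ o0).
have hg0 : forall j : 'I_n.+1, (j < n)%N -> g ord_max j = 0.
  move=> j hj; have [h _ _] := key_poly H (hdn _ hj) (hd0 _ hj).
  move: h; rewrite head_delta // mul1r last_eq -colE mxE.
  by move/eqP; rewrite mul_conjC_eq0 => /eqP.
have hH (w : cv) : w ord_max 0 = 0 -> head_sq (g *m w) = head_sq w * (mu * mu^*).
  move=> wn; have := head_ge0 w; rewrite le_eqVlt => /orP [/eqP h0|hp].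
    have w0 : w = 0.
      apply/matrixP => i j; rewrite (ord1 j) mxE.
      case: (boolP (i < n)%N) => hi; first exact: head_eq0 (esym h0) i hi.
      by move: hi; rewrite ltn_max negbK => /eqP ->.
    by rewrite w0 mulmx0 head0 mul0r.
  have [_ h2 _] := key_poly H wn hp.
  by apply/eqP; rewrite -subr_eq0 -h2 last_eq cE.
have hmu : mu != 0.
  apply/eqP => m0.
  have ge0 : g *m e = 0.
    apply/matrixP => i j; rewrite (ord1 j) [in RHS]mxE.
    case: (boolP (i < n)%N) => hi; first exact: hc0.
    by move: hi; rewrite ltn_max negbK => /eqP ->; rewrite cE.
  have := mulKmx ug e; rewrite ge0 mulmx0 => /matrixP /(_ ord_max 0).
  by rewrite e_last mxE => /eqP; rewrite eq_sym oner_eq0.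
have ge : g *m e = mu *: e.
  apply/matrixP => i j; rewrite (ord1 j) mxZE.
  case: (boolP (i < n)%N) => hi; first by rewrite hc0 // e_head // mulr0.
  by move: hi; rewrite ltn_max negbK => /eqP ->; rewrite cE e_last mulr1.
have hQ (w : cv) : F J (g *m w) (g *m w) = (mu * mu^*) * F J w w.
  pose w' := w + (- w ord_max 0) *: e.
  have w'n : w' ord_max 0 = 0 by rewrite mxDE mxZE e_last mulr1 addrN.
  have wE : w = w' + w ord_max 0 *: e by rewrite /w' -addrA -scalerDl addNr scale0r addr0.
  have hw' : head_sq w' = head_sq w.
    by rewrite headD HseR (HseL w) [head_sq e]head_Hs (HseL e) !mulr0 !addr0.
  clearbody w'.
  have gw'n : (g *m w') ord_max 0 = 0.
    rewrite mxE sum_split w'n mulr0 addr0 big1 // => l hl.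
    by rewrite hg0 ?mul0r.
  have -> : g *m w = g *m w' + (w ord_max 0 * mu) *: e.
    by rewrite {1}wE mulmxDr -scalemxAr ge scalerA.
  rewrite !FJ_head headD HseR (HseL (g *m w')) [head_sq e]head_Hs (HseL e) !mulr0 !addr0.
  rewrite hH // hw' !last_eq mxDE mxZE gw'n e_last add0r mulr1 rmorphM /=.
  ring.
have hG : hc g *m J *m g = (mu * mu^*) *: J.
  by apply: F_ext => u v; rewrite F_conj FZM (polar_scale hQ).
exists (mu^-1 *: g); split; [|split].
- change (hc (mu^-1 *: g) *m J *m (mu^-1 *: g) = J).
  rewrite hcZ -!scalemxAl -scalemxAr hG !scalerA.
  have mc : mu^* != 0 by rewrite conjC_eq0.
  rewrite fmorphV /= -[RHS]scale1r; congr (_ *: _); field.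
  by rewrite mc hmu.
- by exists mu => //; rewrite scalerA divff // scale1r.
exists e; split; last split.
- apply/eqP => /matrixP /(_ ord_max 0); rewrite e_last mxE => /eqP.
  by rewrite oner_eq0.
- by rewrite /inB (head_Hs e) (HseL e) /last_sq e_last normr1 expr1n ltr01.
by exists 1; rewrite -scalemxAl ge scalerA mulVf // scale1r.
Qed.
End S.

Local Open Scope complex_scope.
Unset Implicit Arguments. Set Strict Implicit. Set Printing Implicit Defensive.

(* Elements of PSL(n+1,C) are represented by matrices of determinant 1. *)
Theorem mainTheorem12 (R : realType) (n : nat) (hn : (1 <= n)%N)
    (gamma : 'M[R[i]]_(n.+1)) (hgamma : \det gamma = 1) :
  (exists h : 'M[R[i]]_(n.+1), \det h = 1 /\
     forall r : R[i], 0 < r -> maps_T_onto (invmx h *m gamma *m h) r)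
  <->
  (exists h : 'M[R[i]]_(n.+1), \det h = 1 /\
     elliptic_PU (invmx h *m gamma *m h)).
Proof.
split.
  move=> [h [dh Hh]]; exists h; split => //.
  apply: forward_elliptic => //.
    by rewrite unitmxE !det_mulmx det_inv dh hgamma invr1 !mul1r unitr1.
  by move=> r r0 z z0 hz; exact: (Hh r r0).1 z z0 hz.
move=> [h [dh [A [hA [[c c0 hcA] [z [z0 [hz [lam hAz]]]]]]]]].
have [k [uk [hB hBe]]] := conj_construct hA z0 hz hAz.
have dk : \det k != 0 by rewrite -unitfE -unitmxE.
pose rho := (n.+1).-root (\det k)^-1.
have hrho : rho ^+ n.+1 = (\det k)^-1 by exact: rootCK.
have rho0 : rho != 0.
  apply/eqP => r0; move: hrho; rewrite r0 expr0n /= => /eqP.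
  by rewrite eq_sym invr_eq0 (negbTE dk).
have uh : h \in unitmx by rewrite unitmxE dh unitr1.
have urk : rho *: k \in unitmx by rewrite unitmxZ // unitfE.
exists (h *m (rho *: k)); split.
  by rewrite det_mulmx dh mul1r detZ hrho mulVf.
have -> : invmx (h *m (rho *: k)) *m gamma *m (h *m (rho *: k)) =
    c *: (invmx k *m A *m k).
  rewrite invmxM' // invmxZ //.
  rewrite -!scalemxAl -!scalemxAr !scalerA mulVf // scale1r.
  by rewrite scalemxAl scalemxAr -hcA !mulmxA.
by move=> r _; exact: T_of_B hB hBe c0 r.
Qed.
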